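(* If the bornological \(V\)-module \(M\) is complete, then so is \(M'\).
   Context: Let \(V\) be a complete discrete valuation ring with uniformiser \(\pi\). A bornology on a set is a collection of subsets (called bounded) containing all finite subsets and closed under finite unions and under taking subsets. A bornological \(V\)-module is a \(V\)-module \(M\) with a bornology such that every bounded subset is contained in a bounded \(V\)-submodule. It is complete if every bounded subset is contained in a bounded \(V\)-submodule which is \(\pi\)-adically complete. A subset \(S\subseteq M\) is compactoid if there is a bounded \(V\)-submodule \(T\subseteq M\) with \(S\subseteq T\) such that for every \(n\in\mathbb N\) there is a finite set \(F_n\subseteq T\) with \(S\subseteq VF_n+\pi^nT\). \(M'\) denotes \(M\) with the bornology consisting of the compactoid subsets. *)

(* Defs.v *)
From HB Require Import structures.
From mathcomp Require Import all_boot all_order all_algebra.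
From mathcomp Require Import all_classical.
Set Implicit Arguments. Unset Strict Implicit. Unset Printing Implicit Defensive.
Import GRing.Theory.
Local Open Scope ring_scope.
Local Open Scope classical_set_scope.

Section Defs.
Variables (V : idomainType) (M : lmodType V).

Definition pimul (p : V) (n : nat) (T : set M) : set M :=
  [set x | exists2 t, T t & x = p ^+ n *: t].

Definition submodule (T : set M) : Prop :=
  T 0 /\ (forall x y, T x -> T y -> T (x + y)) /\ (forall (a : V) x, T x -> T (a *: x)).

(** T is pi-adically complete: separated and complete for the pi-adic filtration
    (pi^n T)_n, i.e. T -> lim T / pi^n T is bijective. *)
Definition pi_adically_complete (p : V) (T : set M) : Prop :=
  (forall x, (forall n, pimul p n T x) -> x = 0) /\
  (forall u : nat -> M, (forall n, T (u n)) ->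
     (forall n, pimul p n T (u n.+1 - u n)) ->
     exists2 x, T x & forall n, pimul p n T (x - u n)).

Definition bornology (B : set (set M)) : Prop :=
  (forall S : set M, finite_set S -> B S) /\
  (forall S1 S2, B S1 -> B S2 -> B (S1 `|` S2)) /\
  (forall S1 S2 : set M, S1 `<=` S2 -> B S2 -> B S1).

Definition bornological_module (B : set (set M)) : Prop :=
  bornology B /\
  (forall S, B S -> exists T, [/\ submodule T, B T & S `<=` T]).

Definition complete_bornological_module (p : V) (B : set (set M)) : Prop :=
  bornological_module B /\
  (forall S, B S -> exists T,
     [/\ submodule T, B T, pi_adically_complete p T & S `<=` T]).

Definition vspan (F : seq M) : set M :=
  [set x | exists a : nat -> V, x = \sum_(i < size F) a i *: F`_i].

Definition compactoid (p : V) (B : set (set M)) (S : set M) : Prop :=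
  exists T, [/\ submodule T, B T, S `<=` T &
    forall n : nat, exists F : seq M, {subset F <= T} /\
      S `<=` [set z | exists x y, [/\ vspan F x, pimul p n T y & z = x + y]]].

End Defs.

Definition complete_dvr_uniformiser (V : idomainType) (p : V) : Prop :=
  [/\ p != 0, p \isn't a GRing.unit,
      (forall x : V, x != 0 -> exists n (u : V), u \is a GRing.unit /\ x = u * p ^+ n)
    & @pi_adically_complete V V^o p setT].

(* Main.v *)
Require Import Defs.
From HB Require Import structures.
From mathcomp Require Import all_boot all_order all_algebra.
From mathcomp Require Import all_classical.
From mathcomp Require Import finmap.
Set Implicit Arguments. Unset Strict Implicit.
Import GRing.Theory.
Local Open Scope ring_scope.
Local Open Scope classical_set_scope.

Definition Wset (V : idomainType) (M : lmodType V) (p : V) (F : seq M) (n : nat)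
  (T : set M) : set M :=
  [set z | exists x y, [/\ vspan F x, pimul p n T y & z = x + y]].

Lemma sub_opp (V : idomainType) (M : lmodType V) (T : set M) x :
  submodule T -> T x -> T (- x).
Proof. by move=> [_ [_ HZ]] Tx; rewrite -scaleN1r; apply: HZ. Qed.

Lemma sub_sub (V : idomainType) (M : lmodType V) (T : set M) x y :
  submodule T -> T x -> T y -> T (x - y).
Proof. by move=> HT Tx Ty; apply: HT.2.1 => //; apply: sub_opp. Qed.

Lemma vspan_cons (V : idomainType) (M : lmodType V) (f : M) F x :
  vspan (f :: F) x <-> exists c y, vspan F y /\ x = c *: f + y.
Proof.
split.
- move=> [a ->]; exists (a 0%N), (\sum_(i < size F) a i.+1 *: F`_i); split.
    by exists (fun i => a i.+1).
  by rewrite /= big_ord_recl /=.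
- move=> [c [y [[a ->] ->]]]; exists (fun i => if i is j.+1 then a j else c).
  by rewrite /= big_ord_recl /=.
Qed.

Lemma vspan0 (V : idomainType) (M : lmodType V) (F : seq M) : vspan F 0.
Proof. by exists (fun _ => 0); rewrite big1 // => i _; rewrite scale0r. Qed.

Lemma vspan_nil (V : idomainType) (M : lmodType V) x : vspan ([::] : seq M) x -> x = 0.
Proof. by move=> [a ->]; rewrite big_ord0. Qed.

Lemma vspan_cat (V : idomainType) (M : lmodType V) (F G : seq M) x y :
  vspan F x -> vspan G y -> vspan (F ++ G) (x + y).
Proof.
elim: F x => [|f F IH] x /=.
  by move=> /vspan_nil -> Gy; rewrite add0r.
move=> /vspan_cons [c [x' [Fx' ->]]] Gy; apply/vspan_cons.
exists c, (x' + y); split; first exact: IH.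
by rewrite addrA.
Qed.

Lemma vspan_mem (V : idomainType) (M : lmodType V) (F : seq M) x :
  x \in F -> vspan F x.
Proof.
elim: F => [|f F IH] //; rewrite in_cons => /orP [/eqP -> | H]; apply/vspan_cons.
  by exists 1, 0; split; [exact: vspan0 | rewrite scale1r addr0].
by exists 0, x; split; [exact: IH | rewrite scale0r add0r].
Qed.

Lemma submodule_vspan (V : idomainType) (M : lmodType V) (F : seq M) :
  submodule (vspan F).
Proof.
split; first exact: vspan0.
split.
- move=> _ _ [a ->] [b ->]; exists (fun i => a i + b i).
  by rewrite -big_split /=; apply: eq_bigr => i _; rewrite scalerDl.
- move=> c _ [a ->]; exists (fun i => c * a i).
  by rewrite scaler_sumr; apply: eq_bigr => i _; rewrite scalerA.
Qed.

Lemma submodule_pimul (V : idomainType) (M : lmodType V) (p : V) n (T : set M) :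
  submodule T -> submodule (pimul p n T).
Proof.
move=> [T0 [TD TZ]]; split; first by exists 0 => //; rewrite scaler0.
split.
- move=> _ _ [t Tt ->] [s Ts ->]; exists (t + s); first exact: TD.
  by rewrite scalerDr.
- move=> a _ [t Tt ->]; exists (a *: t); first exact: TZ.
  by rewrite !scalerA mulrC.
Qed.

Lemma pimul_mono (V : idomainType) (M : lmodType V) (p : V) n (T1 T2 : set M) :
  T1 `<=` T2 -> pimul p n T1 `<=` pimul p n T2.
Proof. by move=> H x [t Tt ->]; exists t => //; apply: H. Qed.

Lemma pimul_le (V : idomainType) (M : lmodType V) (p : V) m n (T : set M) x :
  submodule T -> pimul p (m + n) T x -> pimul p n T x.
Proof.
move=> HT [t Tt ->]; exists (p ^+ m *: t); first by apply: HT.2.2.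
by rewrite scalerA -exprD addnC.
Qed.

Lemma submodule_W (V : idomainType) (M : lmodType V) (p : V) F n (T : set M) :
  submodule T -> submodule (Wset p F n T).
Proof.
move=> HT; have [P0 [PD PZ]] := submodule_pimul p n HT.
have [V0 [VD VZ]] := submodule_vspan F.
split; first by exists 0, 0; split => //; rewrite addr0.
split.
- move=> _ _ [a [b [va pb ->]]] [c [d [vc pd ->]]].
  exists (a + c), (b + d); split; [exact: VD | exact: PD | by rewrite addrACA].
- move=> r _ [a [b [va pb ->]]]; exists (r *: a), (r *: b); split;
    [exact: VZ | exact: PZ | by rewrite scalerDr].
Qed.

Lemma complete_closed (V : idomainType) (M : lmodType V) (p : V) (T0 C : set M) :
  submodule T0 -> submodule C -> C `<=` T0 -> pi_adically_complete p T0 ->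
  (forall x, T0 x -> (forall n, exists2 c, C c & pimul p n T0 (x - c)) -> C x) ->
  pi_adically_complete p C.
Proof.
move=> HT0 HC CT0 [sep0 comp0] clo; split.
  by move=> x Hx; apply: sep0 => n; exact: pimul_mono CT0 _ (Hx n).
move=> u Cu Hu.
have [x T0x Hx] := comp0 u (fun n => CT0 _ (Cu n))
  (fun n => pimul_mono CT0 (Hu n)).
have Cx : C x by apply: clo => // n; exists (u n).
exists x => // k.
have Hu' : forall m, exists s, C s /\ u m.+1 - u m = p ^+ m *: s.
  by move=> m; have [s ? ?] := Hu m; exists s.
have [s Hs] := choice Hu'.
pose w i := \sum_(j < i) p ^+ j *: s (k + j)%N.
have Cs : forall m, C (s m) by move=> m; have [] := Hs m.
have Es : forall m, u m.+1 - u m = p ^+ m *: s m by move=> m; have [] := Hs m.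
have Cw : forall i, C (w i).
  move=> i; rewrite /w; elim/big_ind: _ => //; first exact: HC.1.
    by move=> a b; apply: HC.2.1.
  by move=> j _; apply: HC.2.2.
have Ew : forall i, p ^+ k *: w i = u (k + i)%N - u k.
  elim=> [|i IH]; first by rewrite /w big_ord0 scaler0 addn0 subrr.
  rewrite /w big_ord_recr /= scalerDr -/(w i) IH scalerA -exprD addnS -Es.
  by rewrite addrC addrA subrK.
have Hw : forall i, pimul p i T0 (w i.+1 - w i).
  move=> i; exists (s (k + i)%N); first exact: CT0.
  by rewrite /w big_ord_recr /= addrAC subrr add0r.
have [t T0t Ht] := comp0 w (fun i => CT0 _ (Cw i)) Hw.
have Ct : C t by apply: clo => // i; exists (w i).
exists t => //.
apply/eqP; rewrite -subr_eq0; apply/eqP; apply: sep0 => i.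
have [a T0a Ea] := Hx (k + i)%N.
have [b T0b Eb] := Ht i.
exists (p ^+ k *: a - p ^+ k *: b).
  by apply: sub_sub => //; apply: HT0.2.2.
have E2 : p ^+ i *: (p ^+ k *: b) = p ^+ k *: (t - w i).
  by rewrite Eb !scalerA mulrC.
have E1 : p ^+ i *: (p ^+ k *: a) = x - u (k + i)%N.
  by rewrite Ea scalerA -exprD addnC.
rewrite scalerBr E1 E2 scalerBr Ew.
by rewrite opprB !addrA subrK.
Qed.

Theorem lemma4p1 (V : idomainType) (p : V) (M : lmodType V) (B : set (set M)) :
  complete_dvr_uniformiser p ->
  complete_bornological_module p B ->
  complete_bornological_module p (compactoid p B).
Proof.
move=> _ [[[Bfin [BU Bsub]] Bmod] Bcomp].
have key : forall S, compactoid p B S -> exists T,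
    [/\ submodule T, compactoid p B T, pi_adically_complete p T & S `<=` T].
  move=> S [T [Tsub BT ST HF]].
  have [T0 [T0sub BT0 T0c TT0]] := Bcomp T BT.
  have [Fn HFn] := choice HF.
  pose C := [set z | T0 z /\ forall n, Wset p (Fn n) n T0 z].
  have Csub : submodule C.
    split; first by split; [exact: T0sub.1 | move=> n; exact: (submodule_W _ _ n T0sub).1].
    split.
    - move=> x y [T0x Wx] [T0y Wy]; split; first exact: T0sub.2.1.
      by move=> n; apply: (submodule_W _ _ n T0sub).2.1.
    - move=> a x [T0x Wx]; split; first exact: T0sub.2.2.
      by move=> n; apply: (submodule_W _ _ n T0sub).2.2.
  have CT0 : C `<=` T0 by move=> z [].
  exists C; split => //.
  - exists T0; split => // n; exists (Fn n); split; last by move=> z [_ ]; apply.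
    move=> x /(proj1 (HFn n)); rewrite !in_setE; exact: TT0.
  - apply: (complete_closed T0sub) => // x T0x Hc; split => // n.
    have [c [_ Hcn] Hxc] := Hc n.
    have [a [b [va pb Ec]]] := Hcn n.
    exists a, (b + (x - c)); split => //.
      by apply: (submodule_pimul _ _ T0sub).2.1.
    by rewrite addrA -Ec addrC subrK.
  - move=> x Sx; split; first exact: TT0 (ST _ Sx).
    move=> n; have [_ HS] := HFn n.
    have [a [b [va [t Tt ->] ->]]] := HS x Sx.
    exists a, (p ^+ n *: t); split => //; exists t => //; exact: TT0.
split; last first.
  by move=> S /key [T [? ? ? ?]]; exists T; split.
split; last first.
  by move=> S /key [T [? ? ? ?]]; exists T; split.
split; [|split].
- move=> S Sfin; have [X SX] := finite_fsetP.1 Sfin.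
  have [T [Tsub BT ST]] := Bmod S (Bfin S Sfin).
  exists T; split => // n; exists X; split.
    by move=> x xX; rewrite in_setE; apply: ST; rewrite SX.
  move=> x Sx; exists x, 0; split; last by rewrite addr0.
    by apply: vspan_mem; move: Sx; rewrite SX.
  by exists 0; [exact: Tsub.1 | rewrite scaler0].
- move=> S1 S2 [T1 [T1sub BT1 ST1 H1]] [T2 [T2sub BT2 ST2 H2]].
  have [T [Tsub BT T12]] := Bmod _ (BU _ _ BT1 BT2).
  exists T; split => //.
    by move=> x [/ST1 ? | /ST2 ?]; apply: T12; [left | right].
  move=> n; have [F1 [F1T SF1]] := H1 n; have [F2 [F2T SF2]] := H2 n.
  exists (F1 ++ F2); split.
    move=> x; rewrite mem_cat => /orP [/F1T | /F2T]; rewrite !in_setE => ?.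
      by apply: T12; left.
    by apply: T12; right.
  move=> x [/SF1 | /SF2] [a [b [va pb ->]]].
    exists (a + 0), b; split; [exact: vspan_cat va (vspan0 _) |
      by apply: pimul_mono pb => y ?; apply: T12; left | by rewrite addr0].
  exists (0 + a), b; split; [exact: vspan_cat (vspan0 _) va |
    by apply: pimul_mono pb => y ?; apply: T12; right | by rewrite add0r].
- move=> S1 S2 S12 [T [Tsub BT ST H]]; exists T; split => //.
    by move=> x /S12 /ST.
  move=> n; have [F [FT SF]] := H n; exists F; split => // x /S12 /SF //.
Qed.
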